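(* In the setting described in the context, let $n\ge3$ and let $M=\{(0,\dots,0,u):u\in\mathsf k\}\subseteq U$. Assume that for every $\upsilon=(0,\dots,0,u)\in M$ with $u\ne0$, the centralizer of $\upsilon U_{n-3}$ in $U_{n-1}/U_{n-3}$ equals $U_{n-2}/U_{n-3}$. Then (up to a constant factor $c\in\mathsf k^*$ in the added term, which can be normalized to $1$ by rescaling a coordinate) the automorphism of $U_{n-1}/U_{n-3}$ induced by conjugation by $\upsilon=(0,\dots,0,u)$ maps $(\dots,x_{n-2},x_{n-1},0)U_{n-3}\mapsto(\dots,x_{n-2}+u^hx_{n-1}^k,x_{n-1},0)U_{n-3}$, where $h,k$ are powers of $p$ if $\mathrm{char}\,\mathsf k=p>0$, and $h=k=1$ otherwise.
   Context: Let $\mathsf k$ be an algebraically closed field and $G=U\rtimes T$ the semidirect product of an $n$-dimensional connected unipotent algebraic group $U$ by a $1$-dimensional connected torus $T$. Assume $U$ is identified with the affine space $\mathsf k^n$ so that: the subsets $U_i=\{(x_1,\dots,x_n): x_{i+1}=\dots=x_n=0\}$ ($0\le i\le n$) are normal subgroups of $G$; the product is $(x_1,\dots,x_n)(y_1,\dots,y_n)=(x_1+y_1+\psi_1,\ \dots,\ x_{n-1}+y_{n-1}+\psi_{n-1},\ x_n+y_n)$ where $\psi_j\in\mathsf k[x_{j+1},\dots,x_n,y_{j+1},\dots,y_n]$; and each $\tau\in T$ acts on $U$ by the automorphism $(x_1,\dots,x_n)\mapsto(a_\tau^{e_1}x_1+\varphi_1^{(\tau)}(x_2,\dots,x_n),\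 \dots,\ a_\tau^{e_{n-1}}x_{n-1}+\varphi^{(\tau)}_{n-1}(x_n),\ a_\tau^{e_n}x_n)$, where $a_\tau\in\mathsf k^*$ depends bi-regularly on $\tau$, each $\varphi^{(\tau)}_j$ is a morphism, and the $e_j$ are fixed integers. *)

(* Defs.v *)
From HB Require Import structures.
From mathcomp Require Import all_boot all_order all_algebra all_field.
Set Implicit Arguments. Unset Strict Implicit. Unset Printing Implicit Defensive.
Import Order.TTheory GRing.Theory Num.Theory.
Local Open Scope ring_scope.

(* Points of U = k^n are row vectors 'rV[F]_n; the paper's coordinate x_i
   (1 <= i <= n) is  x 0 (i-1). *)

Definition polyfun (F : fieldType) (I : finType) (S : pred I)
  (f : (I -> F) -> F) : Prop :=
  exists s : seq (F * {ffun I -> nat}),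
    (forall t, t \in s -> forall i, ~~ S i -> t.2 i = 0%N) /\
    forall v, f v = \sum_(t <- s) t.1 * \prod_(i : I) v i ^+ t.2 i.

(* 1-based coordinate x_i of a point (0 if out of range) *)
Definition coord (F : fieldType) (n : nat) (x : 'rV[F]_n) (i : nat) : F :=
  if (0 < i)%N then
    (if @insub nat (fun k => k < n)%N 'I_n i.-1 is Some j then x 0 j else 0)
  else 0.

(* membership in U_i = { x | x_{i+1} = ... = x_n = 0 } *)
Definition inU (F : fieldType) (n : nat) (i : nat) (x : 'rV[F]_n) : Prop :=
  forall j : 'I_n, (i <= j)%N -> x 0 j = 0.

Definition pt (F : fieldType) (n : nat) (x y : 'rV[F]_n) : 'I_n + 'I_n -> F :=
  fun i => match i with inl k => x 0 k | inr k => y 0 k end.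

(* variables x_{j+1..n}, y_{j+1..n} (0-based index strictly above j) *)
Definition above2 (n : nat) (j : 'I_n) : pred ('I_n + 'I_n) :=
  fun i => match i with inl k => (j < k)%N | inr k => (j < k)%N end.

Definition unipotent_law (F : fieldType) (n : nat)
  (mul : 'rV[F]_n -> 'rV[F]_n -> 'rV[F]_n) : Prop :=
  exists psi : 'I_n -> ('I_n + 'I_n -> F) -> F,
    (forall j, polyfun (above2 j) (psi j)) /\
    (forall j : 'I_n, j.+1 = n -> forall v, psi j v = 0) /\
    forall x y j, mul x y 0 j = x 0 j + y 0 j + psi j (pt x y).

Definition group_axioms (F : fieldType) (n : nat)
  (mul : 'rV[F]_n -> 'rV[F]_n -> 'rV[F]_n) (inv : 'rV[F]_n -> 'rV[F]_n) : Prop :=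
  (forall x y z, mul x (mul y z) = mul (mul x y) z) /\
  (forall x, mul 0 x = x) /\ (forall x, mul x 0 = x) /\
  (forall x, mul x (inv x) = 0) /\ (forall x, mul (inv x) x = 0).

Definition conj (F : fieldType) (n : nat)
  (mul : 'rV[F]_n -> 'rV[F]_n -> 'rV[F]_n) (inv : 'rV[F]_n -> 'rV[F]_n)
  (g x : 'rV[F]_n) : 'rV[F]_n := mul (mul g x) (inv g).

(* The torus T (a 1-dimensional connected torus, identified with k^* ) acts
   on U: act tau for tau <> 0. *)
Definition torus_action (F : fieldType) (n : nat)
  (mul : 'rV[F]_n -> 'rV[F]_n -> 'rV[F]_n)
  (act : F -> 'rV[F]_n -> 'rV[F]_n) : Prop :=
  (forall x, act 1 x = x) /\
  (forall t s x, t != 0 -> s != 0 -> act (t * s) x = act t (act s x)) /\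
  (forall t x y, t != 0 -> act t (mul x y) = mul (act t x) (act t y)).

Definition biregular_units (F : fieldType) (a : F -> F) : Prop :=
  (forall t, t != 0 -> a t != 0) /\
  exists (b : F -> F) (P Q : {poly F}) (m1 m2 : nat),
    (forall t, t != 0 -> b t != 0) /\
    (forall t, t != 0 -> a t = P.[t] / t ^+ m1) /\
    (forall t, t != 0 -> b t = Q.[t] / t ^+ m2) /\
    (forall t, t != 0 -> b (a t) = t) /\
    (forall t, t != 0 -> a (b t) = t).

Definition torus_form (F : fieldType) (n : nat)
  (act : F -> 'rV[F]_n -> 'rV[F]_n) (a : F -> F) (e : 'I_n -> int) : Prop :=
  exists phi : F -> 'I_n -> ('I_n -> F) -> F,
    (forall t (j : 'I_n), t != 0 -> polyfun (fun k : 'I_n => (j < k)%N) (phi t j)) /\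
    (forall t (j : 'I_n), j.+1 = n -> forall v, phi t j v = 0) /\
    forall t x j, t != 0 ->
      act t x 0 j = a t ^ e j * x 0 j + phi t j (fun k => x 0 k).

(* the U_i are normal subgroups of G = U x| T *)
Definition normal_series (F : fieldType) (n : nat)
  (mul : 'rV[F]_n -> 'rV[F]_n -> 'rV[F]_n) (inv : 'rV[F]_n -> 'rV[F]_n)
  (act : F -> 'rV[F]_n -> 'rV[F]_n) : Prop :=
  forall i, (i <= n)%N ->
    (forall x y, inU i x -> inU i y -> inU i (mul x y)) /\
    (forall x, inU i x -> inU i (inv x)) /\
    (forall g x, inU i x -> inU i (conj mul inv g x)) /\
    (forall t x, t != 0 -> inU i x -> inU i (act t x)).

Definition same_coset (F : fieldType) (n : nat)
  (mul : 'rV[F]_n -> 'rV[F]_n -> 'rV[F]_n) (i : nat) (a b : 'rV[F]_n) : Prop :=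
  exists z, inU i z /\ b = mul a z.

Definition upsilon (F : fieldType) (n : nat) (u : F) : 'rV[F]_n :=
  \row_(j < n) (if j.+1 == n then u else 0).

Definition target (F : fieldType) (n : nat) (c u : F) (h k : nat)
  (x : 'rV[F]_n) : 'rV[F]_n :=
  \row_(j < n) (if j.+3 == n
                then x 0 j + c * u ^+ h * coord x n.-1 ^+ k
                else x 0 j).

(* Main.v *)
Require Import Defs.
From HB Require Import structures.
From mathcomp Require Import all_boot all_order all_algebra all_field.
From Stdlib Require Import Lia Classical.
Import Order.TTheory GRing.Theory Num.Theory.
Local Open Scope ring_scope.

Set Implicit Arguments. Unset Strict Implicit. Unset Printing Implicit Defensive.

Section Alg.
Variable F : closedFieldType.

Lemma nonroot_nz (R : {poly F}) : R != 0 -> exists u, u != 0 /\ R.[u] != 0.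
Proof.
move=> nzR.
have szS : size ('X * R) = (size R).+1 by rewrite mulrC size_mulX.
have hs : size ('X * R - 1) = (size R).+1.
  rewrite size_addl szS // size_opp size_poly1 ltnS lt0n size_poly_eq0 //.
have /closed_rootP [x rx] : size ('X * R - 1) != 1.
  by rewrite hs eqSS size_poly_eq0.
move: rx; rewrite rootE !hornerE subr_eq0 => /eqP hx.
exists x; split.
  by apply/negP => /eqP x0; move: hx; rewrite x0 mul0r => /eqP; rewrite eq_sym oner_eq0.
by apply/negP => /eqP r0; move: hx; rewrite r0 mulr0 => /eqP; rewrite eq_sym oner_eq0.
Qed.

Lemma poly_eq_fun (P Q : {poly F}) : (forall v, P.[v] = Q.[v]) -> P = Q.
Proof.
move=> h; apply/eqP; rewrite -subr_eq0; apply/negPn/negP => /nonroot_nz [u [_]].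
by rewrite !hornerE h subrr eqxx.
Qed.

Lemma monomial (P : {poly F}) : (forall v, v != 0 -> P.[v] != 0) ->
  exists a q, a != 0 /\ P = a *: 'X^q.
Proof.
move=> h.
have nzP : P != 0 by apply/negP => /eqP P0; move: (h 1 (oner_neq0 _)); rewrite P0 horner0 eqxx.
have [q [Q nQ DP]] := multiplicity_XsubC P 0.
rewrite nzP /= in nQ.
rewrite subr0 in DP.
have : size Q == 1.
  apply/negPn/negP => /closed_rootP [x rx].
  have x0 : x != 0 by apply/negP => /eqP x0; move: rx; rewrite x0 (negbTE nQ).
  by move: (h x x0); rewrite DP hornerM (rootP rx) mul0r eqxx.
case/size_poly1P => c c0 DQ.
by exists c, q; split => //; rewrite DP DQ mul_polyC.
Qed.

Lemma add_pow_ge2 q : (forall v w : F, (v + w) ^+ q = v ^+ q + w ^+ q) ->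
  (1 < q)%N -> q%:R = 0 :> F.
Proof.
move=> h q2.
pose P : {poly F} := ('X + 1) ^+ q - ('X ^+ q + 1).
have P0 : P = 0.
  apply: poly_eq_fun => v; rewrite /P !hornerE h expr1n subrr //.
have := congr1 (fun p => (deriv p).[0]) P0.
rewrite /P derivB derivD deriv_exp derivD derivX derivC addr0 mul1r derivXn.
rewrite deriv0 horner0 !hornerE /=.
case: q q2 {h P P0} => [|[|q]] // _ /=.
by rewrite !hornerMn horner_exp hornerXn hornerD hornerX hornerC add0r expr1n expr0n /= mul0rn subr0.
Qed.

Lemma additive_pow q : (forall v w : F, (v + w) ^+ q = v ^+ q + w ^+ q) ->
  (forall p, p \in [pchar F] -> exists i, q = (p ^ i)%N) /\
  ((forall p, p \notin [pchar F]) -> q = 1%N).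
Proof.
move=> h.
have q0 : (0 < q)%N.
  case: q h => // h; move: (h 1 1); rewrite !expr0 => /eqP.
  by rewrite -{1}(addr0 1) (inj_eq (addrI 1)) eq_sym oner_eq0.
split.
- move=> p pc; have pp := pcharf_prime pc.
  have [r cop Dq] := pfactor_coprime pp q0.
  exists (logn p q).
  set e := logn p q in Dq *.
  suff r1 : r = 1%N by rewrite Dq r1 mul1n.
  have addr : forall a b : F, (a + b) ^+ r = a ^+ r + b ^+ r.
    move=> a b.
    have root_of : forall c : F, exists c', c' ^+ (p ^ e) = c.
      move=> c.
      have : size ('X^(p ^ e) - c%:P) != 1.
        by rewrite size_XnsubC ?expn_gt0 ?prime_gt0 // eqSS -lt0n expn_gt0 prime_gt0.
      case/closed_rootP => x; rewrite rootE !hornerE subr_eq0 => /eqP hx.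
      by exists x.
    have [a' <-] := root_of a; have [b' <-] := root_of b.
    have pn : [pchar F].-nat (p ^ e)%N.
      by rewrite (eq_pnat _ (pcharf_eq pc)) pnatX (pnat_id pp).
    by rewrite -exprDn_pchar // -!exprM !(mulnC _ r) -Dq.
  have r0 : r != 0%N by apply: contraTneq q0 => r0; rewrite Dq r0.
  case: (ltngtP r 1) => // [r_lt1|r_gt1].
    by rewrite ltnS leqn0 (negbTE r0) in r_lt1.
  have := add_pow_ge2 addr r_gt1; move/eqP; rewrite -(dvdn_pcharf pc) => pr.
  by rewrite prime_coprime // pr in cop.
- move=> nch; case: (ltngtP q 1) => // [q_lt1|q_gt1].
    by rewrite ltnS leqn0 in q_lt1; rewrite (eqP q_lt1) in q0.
  have /eqP qz := add_pow_ge2 h q_gt1.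
  have [p pc] := natf0_pchar q0 qz.
  by move: (nch p); rewrite pc.
Qed.

Definition poly2 (f : F -> F -> F) :=
  exists s : seq (F * nat * nat),
    forall u v, f u v = \sum_(t <- s) t.1.1 * u ^+ t.1.2 * v ^+ t.2.

Lemma poly2_ext f g : (forall u v, f u v = g u v) -> poly2 f -> poly2 g.
Proof. by move=> e [s Ds]; exists s => u v; rewrite -e. Qed.

Lemma poly2_const c : poly2 (fun _ _ => c).
Proof. by exists [:: (c, 0%N, 0%N)] => u v; rewrite big_seq1 /= !expr0 !mulr1. Qed.

Lemma poly2_u : poly2 (fun u _ => u).
Proof. by exists [:: (1, 1%N, 0%N)] => u v; rewrite big_seq1 /= expr0 expr1 mulr1 mul1r. Qed.

Lemma poly2_v : poly2 (fun _ v => v).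
Proof. by exists [:: (1, 0%N, 1%N)] => u v; rewrite big_seq1 /= expr0 expr1 !mul1r. Qed.

Lemma poly2_add f g : poly2 f -> poly2 g -> poly2 (fun u v => f u v + g u v).
Proof.
by move=> [s Ds] [r Dr]; exists (s ++ r) => u v; rewrite big_cat /= Ds Dr.
Qed.

Lemma poly2_opp f : poly2 f -> poly2 (fun u v => - f u v).
Proof.
move=> [s Ds]; exists [seq (- t.1.1, t.1.2, t.2) | t <- s] => u v.
by rewrite big_map Ds -sumrN; apply: eq_bigr => t _ /=; rewrite !mulNr.
Qed.

Lemma poly2_sum I (r : seq I) (f : I -> F -> F -> F) :
  (forall i, poly2 (f i)) -> poly2 (fun u v => \sum_(i <- r) f i u v).
Proof.
move=> h; elim: r => [|i r IH].
  by apply: (poly2_ext _ (poly2_const 0)) => u v; rewrite big_nil.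
by apply: (poly2_ext _ (poly2_add (h i) IH)) => u v; rewrite big_cons.
Qed.

Lemma poly2_monoM c i j g : poly2 g ->
  poly2 (fun u v => c * u ^+ i * v ^+ j * g u v).
Proof.
move=> [s Ds]; exists [seq (c * t.1.1, (i + t.1.2)%N, (j + t.2)%N) | t <- s] => u v.
rewrite big_map Ds mulr_sumr; apply: eq_bigr => t _ /=.
by rewrite !exprD mulrACA; congr (_ * _); rewrite mulrACA.
Qed.

Lemma poly2_mul f g : poly2 f -> poly2 g -> poly2 (fun u v => f u v * g u v).
Proof.
move=> [s Ds] pg.
apply: (poly2_ext (f := fun u v => \sum_(t <- s) t.1.1 * u ^+ t.1.2 * v ^+ t.2 * g u v)).
  by move=> u v; rewrite Ds mulr_suml.
by apply: poly2_sum => t; apply: poly2_monoM.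
Qed.

Lemma poly2_prod I (r : seq I) (f : I -> F -> F -> F) :
  (forall i, poly2 (f i)) -> poly2 (fun u v => \prod_(i <- r) f i u v).
Proof.
move=> h; elim: r => [|i r IH].
  by apply: (poly2_ext _ (poly2_const 1)) => u v; rewrite big_nil.
by apply: (poly2_ext _ (poly2_mul (h i) IH)) => u v; rewrite big_cons.
Qed.

Lemma poly2_exp f k : poly2 f -> poly2 (fun u v => f u v ^+ k).
Proof.
move=> pf; elim: k => [|k IH].
  by apply: (poly2_ext _ (poly2_const 1)) => u v; rewrite expr0.
by apply: (poly2_ext _ (poly2_mul pf IH)) => u v; rewrite exprS.
Qed.

Lemma poly2_comp (I : finType) (S : pred I) (f : (I -> F) -> F)
  (V : F -> F -> I -> F) :
  polyfun S f -> (forall i, poly2 (fun u v => V u v i)) ->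
  poly2 (fun u v => f (V u v)).
Proof.
move=> [s [_ Df]] hV.
apply: (poly2_ext (f := fun u v => \sum_(t <- s) t.1 * \prod_(i <- index_enum I) V u v i ^+ t.2 i)).
  by move=> u v; rewrite Df.
apply: poly2_sum => t; apply: poly2_mul; first exact: poly2_const.
by apply: poly2_prod => i; apply: poly2_exp.
Qed.

Lemma poly2_struct D : poly2 D ->
  (forall u v, u != 0 -> v != 0 -> D u v != 0) ->
  exists c h k, c != 0 /\ forall u v, D u v = c * u ^+ h * v ^+ k.
Proof.
move=> [s Ds] nz.
pose Pu u : {poly F} := \sum_(t <- s) (t.1.1 * u ^+ t.1.2) *: 'X^(t.2).
pose Qj j : {poly F} := \sum_(t <- s | t.2 == j) t.1.1 *: 'X^(t.1.2).
have Pu_ev u v : (Pu u).[v] = D u v.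
  by rewrite Ds horner_sum; apply: eq_bigr => t _; rewrite hornerZ hornerXn.
have Pu_coef u j : (Pu u)`_j = (Qj j).[u].
  rewrite /Pu /Qj coef_sum horner_sum [RHS]big_mkcond; apply: eq_bigr => t _.
  rewrite coefZ coefXn eq_sym; case: eqP => _ /=; last by rewrite mulr0.
  by rewrite mulr1 hornerZ hornerXn.
have mono u : u != 0 -> exists a q, a != 0 /\ Pu u = a *: 'X^q.
  by move=> u0; apply: monomial => v v0; rewrite Pu_ev; apply: nz.
have uniqQ j j' : Qj j != 0 -> Qj j' != 0 -> j = j'.
  move=> n1 n2; have [u [u0]] := nonroot_nz (mulf_neq0 n1 n2).
  rewrite hornerM mulf_eq0 negb_or -!Pu_coef => /andP[c1 c2].
  have [a [q [a0 Dp]]] := mono u u0.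
  move: c1 c2; rewrite Dp !coefZ !coefXn.
  move=> c1 c2.
  have e1 : j = q by apply/eqP; apply: contraNT c1 => /negbTE ->; rewrite mulr0.
  have e2 : j' = q by apply/eqP; apply: contraNT c2 => /negbTE ->; rewrite mulr0.
  by rewrite e1 e2.
have [a [k [a0 Dp1]]] := mono 1 (oner_neq0 _).
have Qk0 : Qj k != 0.
  apply/negP => /eqP Qk; move: (Pu_coef 1 k); rewrite Dp1 Qk horner0 coefZ coefXn eqxx mulr1.
  by move=> a0'; rewrite a0' eqxx in a0.
have DPu u : Pu u = (Qj k).[u] *: 'X^k.
  apply/polyP => j; rewrite Pu_coef coefZ coefXn.
  case: (eqVneq j k) => [->|jk]; first by rewrite mulr1.
  rewrite mulr0; case: (eqVneq (Qj j) 0) => [->|Qj0]; first by rewrite horner0.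
  by rewrite (uniqQ _ _ Qj0 Qk0) eqxx in jk.
have [c [h [c0 Db]]] : exists c h, c != 0 /\ Qj k = c *: 'X^h.
  apply: monomial => u u0; move: (nz u 1 u0 (oner_neq0 _)).
  by rewrite -Pu_ev DPu hornerZ hornerXn expr1n mulr1.
exists c, h, k; split => // u v.
by rewrite -Pu_ev DPu hornerZ Db hornerZ !hornerXn.
Qed.

End Alg.

Lemma polyfun_dep (F : fieldType) (I : finType) (S : pred I) f (v w : I -> F) :
  polyfun S f -> (forall i, S i -> v i = w i) -> f v = f w.
Proof.
move=> [s [hs Df]] e; rewrite !Df; apply: eq_big_seq => t ts; congr (_ * _).
apply: eq_bigr => i _; case: (boolP (S i)) => Si; first by rewrite e.
by rewrite (hs t ts i Si) !expr0.
Qed.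

Lemma z0 (F : fieldType) n (j : 'I_n) : (0 : 'rV[F]_n) 0 j = 0.
Proof. by rewrite [LHS]mxE. Qed.

Section Grp.
Variable F : closedFieldType.
Variable m : nat.
Local Notation n := m.+3.
Variables (mul : 'rV[F]_n -> 'rV[F]_n -> 'rV[F]_n) (inv : 'rV[F]_n -> 'rV[F]_n).
Variable psi : 'I_n -> ('I_n + 'I_n -> F) -> F.
Hypothesis psi_poly : forall j, polyfun (above2 j) (psi j).
Hypothesis psi_last : forall j : 'I_n, j.+1 = n -> forall v, psi j v = 0.
Hypothesis mulE : forall x y j, mul x y 0 j = x 0 j + y 0 j + psi j (pt x y).
Hypothesis mA : forall x y z, mul x (mul y z) = mul (mul x y) z.
Hypothesis m0x : forall x, mul 0 x = x.
Hypothesis mx0 : forall x, mul x 0 = x.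
Hypothesis mxV : forall x, mul x (inv x) = 0.
Hypothesis mVx : forall x, mul (inv x) x = 0.

Lemma ltA : (m < n)%N. Proof. by rewrite ltnS leqW. Qed.
Lemma ltB : (m.+1 < n)%N. Proof. by rewrite ltnS. Qed.
Definition A : 'I_n := Ordinal ltA.
Definition B : 'I_n := Ordinal ltB.
Definition C : 'I_n := ord_max.

Lemma AB : (A == B) = false. Proof. by rewrite -val_eqE /= ltn_eqF. Qed.
Lemma AC : (A == C) = false. Proof. by rewrite -val_eqE /= ltn_eqF. Qed.
Lemma BC : (B == C) = false. Proof. by rewrite -val_eqE /= ltn_eqF. Qed.
Lemma CB : (C == B) = false. Proof. by rewrite eq_sym BC. Qed.

Lemma above_BC (k : 'I_n) : (m < k)%N -> k = B \/ k = C.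
Proof.
case: k => k hk /= h.
have [e|e] : k = m.+1 \/ k = m.+2 by move/ssrnat.leP: h; move/ssrnat.leP: hk; lia.
  by left; apply: val_inj.
by right; apply: val_inj.
Qed.

Lemma above_C (k : 'I_n) : (m.+1 < k)%N -> k = C.
Proof.
case: k => k hk /= h; apply: val_inj => /=.
by move/ssrnat.leP: h; move/ssrnat.leP: hk; lia.
Qed.

Lemma ge_ABC (k : 'I_n) : (m <= k)%N -> k = A \/ k = B \/ k = C.
Proof.
case: k => k hk /= h.
have [e|[e|e]] : k = m \/ k = m.+1 \/ k = m.+2 by move/ssrnat.leP: h; move/ssrnat.leP: hk; lia.
- by left; apply: val_inj.
- by right; left; apply: val_inj.
- by right; right; apply: val_inj.
Qed.

Definition vBC (b c : F) : 'rV[F]_n :=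
  \row_(j < n) (if j == B then b else if j == C then c else 0).

Lemma vA b c : vBC b c 0 A = 0. Proof. by rewrite mxE AB AC. Qed.
Lemma vB b c : vBC b c 0 B = b. Proof. by rewrite mxE eqxx. Qed.
Lemma vC b c : vBC b c 0 C = c. Proof. by rewrite mxE CB eqxx. Qed.

Definition pA b1 c1 b2 c2 := psi A (pt (vBC b1 c1) (vBC b2 c2)).
Definition pB c1 c2 := psi B (pt (vBC 0 c1) (vBC 0 c2)).

Lemma psiA_E x y : psi A (pt x y) = pA (x 0 B) (x 0 C) (y 0 B) (y 0 C).
Proof.
apply: polyfun_dep (psi_poly A) _ => -[] k /= /above_BC [->|->];
  by rewrite ?vB ?vC.
Qed.

Lemma psiB_E x y : psi B (pt x y) = pB (x 0 C) (y 0 C).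
Proof.
apply: polyfun_dep (psi_poly B) _ => -[] k /= /above_C ->; by rewrite vC.
Qed.

Lemma mulA_E x y : mul x y 0 A = x 0 A + y 0 A + pA (x 0 B) (x 0 C) (y 0 B) (y 0 C).
Proof. by rewrite mulE psiA_E. Qed.
Lemma mulB_E x y : mul x y 0 B = x 0 B + y 0 B + pB (x 0 C) (y 0 C).
Proof. by rewrite mulE psiB_E. Qed.
Lemma mulC_E x y : mul x y 0 C = x 0 C + y 0 C.
Proof. by rewrite mulE psi_last // addr0. Qed.

Lemma pB_c0 c : pB c 0 = 0.
Proof.
have := congr1 (fun x : 'rV[F]_n => x 0 B) (mx0 (vBC 0 c)).
by rewrite /= mulB_E vB vC !(z0 F) !add0r.
Qed.
Lemma pB_0c c : pB 0 c = 0.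
Proof.
have := congr1 (fun x : 'rV[F]_n => x 0 B) (m0x (vBC 0 c)).
by rewrite /= mulB_E vB vC !(z0 F) !add0r.
Qed.
Lemma pA_bc00 b c : pA b c 0 0 = 0.
Proof.
have := congr1 (fun x : 'rV[F]_n => x 0 A) (mx0 (vBC b c)).
by rewrite /= mulA_E vA vB vC !(z0 F) !add0r.
Qed.
Lemma pA_00bc b c : pA 0 0 b c = 0.
Proof.
have := congr1 (fun x : 'rV[F]_n => x 0 A) (m0x (vBC b c)).
by rewrite /= mulA_E vA vB vC !(z0 F) !add0r.
Qed.


Definition agree (x y : 'rV[F]_n) :=
  [/\ x 0 A = y 0 A, x 0 B = y 0 B & x 0 C = y 0 C].

Lemma sc_agree (a b : 'rV[F]_n) : agree a b -> same_coset mul m a b.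
Proof.
move=> [eA eB eC]; exists (mul (inv a) b); split; last first.
  by rewrite mA mxV m0x.
move=> j /ge_ABC [->|[->|->]].
- by rewrite mulA_E -eA -eB -eC -mulA_E mVx (z0 F).
- by rewrite mulB_E -eB -eC -mulB_E mVx (z0 F).
- by rewrite mulC_E -eC -mulC_E mVx (z0 F).
Qed.

Definition g (u : F) : 'rV[F]_n := upsilon n u.
Lemma gA (u : F) : g u 0 A = 0. Proof. by rewrite mxE eqSS ltn_eqF. Qed.
Lemma gB (u : F) : g u 0 B = 0. Proof. by rewrite mxE eqSS ltn_eqF. Qed.
Lemma gC (u : F) : g u 0 C = u. Proof. by rewrite mxE eqxx. Qed.

Lemma igC (u : F) : inv (g u) 0 C = - u.
Proof.
have := congr1 (fun x : 'rV[F]_n => x 0 C) (mxV (g u)).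
rewrite /= mulC_E gC (z0 F) => /eqP; rewrite addrC addr_eq0 => /eqP //.
Qed.

Lemma igB (u : F) : inv (g u) 0 B + pB u (inv (g u) 0 C) = 0.
Proof.
have := congr1 (fun x : 'rV[F]_n => x 0 B) (mxV (g u)).
by rewrite /= mulB_E gB gC (z0 F) add0r.
Qed.

Lemma igA (u : F) : inv (g u) 0 A + pA 0 u (inv (g u) 0 B) (inv (g u) 0 C) = 0.
Proof.
have := congr1 (fun x : 'rV[F]_n => x 0 A) (mxV (g u)).
by rewrite /= mulA_E gA gB gC (z0 F) add0r.
Qed.

Definition D (u v : F) := pA 0 u v 0 + inv (g u) 0 A +
  pA v u (inv (g u) 0 B) (inv (g u) 0 C).

Definition cj (u : F) (y : 'rV[F]_n) := conj mul inv (g u) y.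

Lemma cjC (u : F) (y : 'rV[F]_n) : y 0 C = 0 -> cj u y 0 C = 0.
Proof. by move=> yC; rewrite /cj /conj !mulC_E gC yC addr0 igC subrr. Qed.

Lemma cjB (u : F) (y : 'rV[F]_n) : y 0 C = 0 -> cj u y 0 B = y 0 B.
Proof.
move=> yC; rewrite /cj /conj mulB_E mulB_E mulC_E gB gC yC addr0 pB_c0 add0r addr0.
by rewrite -addrA igB addr0.
Qed.

Lemma cjA (u : F) (y : 'rV[F]_n) : y 0 C = 0 -> cj u y 0 A = y 0 A + D u (y 0 B).
Proof.
move=> yC; rewrite /cj /conj mulA_E mulA_E mulB_E mulC_E gA gB gC yC addr0 pB_c0.
by rewrite !add0r addr0 /D !addrA.
Qed.

Lemma conj_mul (h x : 'rV[F]_n) : mul (conj mul inv h x) h = mul h x.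
Proof. by rewrite /conj -mA mVx mx0. Qed.

Lemma inv_uniq (a b : 'rV[F]_n) : mul a b = 0 -> b = inv a.
Proof. by move=> e; rewrite -[b]m0x -(mVx a) -mA e mx0. Qed.

Lemma conjM (a b x : 'rV[F]_n) : conj mul inv a (conj mul inv b x) = conj mul inv (mul a b) x.
Proof.
rewrite /conj; have -> : inv (mul a b) = mul (inv b) (inv a).
  symmetry; apply: inv_uniq; rewrite mA -[mul (mul a b) (inv b)]mA mxV mx0 mxV //.
by rewrite !mA.
Qed.

Lemma conj_hom (h x y : 'rV[F]_n) :
  conj mul inv h (mul x y) = mul (conj mul inv h x) (conj mul inv h y).
Proof.
transitivity (mul (mul (mul h x) y) (inv h)); first by rewrite /conj mA.
by rewrite -[conj mul inv h y]/(mul (mul h y) (inv h)) mA mA conj_mul.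
Qed.

Lemma key (u w : F) (x : 'rV[F]_n) :
  let z := mul (mul (g u) (g w)) (inv (g (u + w))) in
  mul (cj u (cj w x)) z = mul z (cj (u + w) x).
Proof.
move=> z.
have hz : mul z (g (u + w)) = mul (g u) (g w) by rewrite /z -mA mVx mx0.
by rewrite /cj conjM -hz -conjM conj_mul.
Qed.


Lemma poly2_vBC (b c : F -> F -> F) k : poly2 b -> poly2 c ->
  poly2 (fun u v => vBC (b u v) (c u v) 0 k).
Proof.
move=> pb pc.
apply: (poly2_ext (f := fun u v => if k == B then b u v else if k == C then c u v else 0)).
  by move=> u v; rewrite mxE.
by case: (k == B) => //; case: (k == C) => //; apply: poly2_const.
Qed.

Lemma poly2_pA (b1 c1 b2 c2 : F -> F -> F) :
  poly2 b1 -> poly2 c1 -> poly2 b2 -> poly2 c2 ->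
  poly2 (fun u v => pA (b1 u v) (c1 u v) (b2 u v) (c2 u v)).
Proof.
move=> p1 p2 p3 p4.
apply: (poly2_comp (f := psi A)
  (V := fun u v => pt (vBC (b1 u v) (c1 u v)) (vBC (b2 u v) (c2 u v))) (psi_poly A)).
by move=> -[] k; apply: poly2_vBC.
Qed.

Lemma poly2_pB (c1 c2 : F -> F -> F) :
  poly2 c1 -> poly2 c2 -> poly2 (fun u v => pB (c1 u v) (c2 u v)).
Proof.
move=> p1 p2.
apply: (poly2_comp (f := psi B)
  (V := fun u v => pt (vBC 0 (c1 u v)) (vBC 0 (c2 u v))) (psi_poly B)).
by move=> -[] k; apply: poly2_vBC => //; apply: poly2_const.
Qed.

Lemma igB_E (u : F) : inv (g u) 0 B = - pB u (- u).
Proof. by apply/eqP; rewrite -addr_eq0 -igC igB. Qed.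

Lemma igA_E (u : F) : inv (g u) 0 A = - pA 0 u (- pB u (- u)) (- u).
Proof. by apply/eqP; rewrite -addr_eq0 -igB_E -igC igA. Qed.

Lemma poly2_D : poly2 D.
Proof.
apply: (poly2_ext (f := fun u v => pA 0 u v 0 + - pA 0 u (- pB u (- u)) (- u)
   + pA v u (- pB u (- u)) (- u))).
  by move=> u v; rewrite /D igA_E igB_E igC.
have pu := poly2_u F; have pv := poly2_v F; have p0 := poly2_const (0 : F).
have pnu := poly2_opp pu.
have pb := poly2_opp (poly2_pB pu pnu).
apply: poly2_add; first apply: poly2_add.
- exact: poly2_pA.
- exact: poly2_opp (poly2_pA p0 pu pb pnu).
- exact: poly2_pA.
Qed.

Hypothesis cent : forall u : F, u != 0 -> forall x : 'rV[F]_n, inU m.+2 x ->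
  (same_coset mul m (mul x (g u)) (mul (g u) x) <-> inU m.+1 x).

Lemma D_nz u v : u != 0 -> v != 0 -> D u v != 0.
Proof.
move=> u0 v0; apply/negP => /eqP D0.
set x := vBC v 0.
have xC : x 0 C = 0 by rewrite vC.
have inx : inU m.+2 x by move=> j hj; rewrite (above_C hj) vC.
have nin : ~ inU m.+1 x.
  by move=> h; move: (h B (leqnn _)); rewrite vB => /eqP; rewrite (negbTE v0).
apply: nin; apply/(cent u0 inx); rewrite -[mul (g u) x]conj_mul -/(cj u x); apply: sc_agree.
split.
- by rewrite [LHS]mulA_E [RHS]mulA_E (cjA u xC) (cjB u xC) (cjC u xC) vA vB xC D0 gA gB gC !add0r ?addr0.
- by rewrite [LHS]mulB_E [RHS]mulB_E (cjB u xC) (cjC u xC) vB xC gB gC.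
- by rewrite [LHS]mulC_E [RHS]mulC_E (cjC u xC) xC gC.
Qed.

Lemma D_add u v1 v2 : D u (v1 + v2) = D u v1 + D u v2.
Proof.
set x1 := vBC v1 0; set x2 := vBC v2 0.
have x1C : x1 0 C = 0 by rewrite vC.
have x2C : x2 0 C = 0 by rewrite vC.
have E : cj u (mul x1 x2) = mul (cj u x1) (cj u x2) := conj_hom _ _ _.
have hC : mul x1 x2 0 C = 0 by rewrite mulC_E x1C x2C addr0.
move: (congr1 (fun y : 'rV[F]_n => y 0 A) E) => /= E0.
rewrite (cjA u hC) [X in _ = X]mulA_E [mul x1 x2 0 A]mulA_E [mul x1 x2 0 B]mulB_E in E0.
rewrite (cjA u x1C) (cjA u x2C) (cjB u x1C) (cjB u x2C) in E0.
move: E0; rewrite (cjC u x1C) (cjC u x2C) !vA !vB !vC pB_c0 !add0r addr0 => E'.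
by apply: (@addIr _ (pA v1 0 v2 0)); rewrite addrC E'.
Qed.

Lemma D_P3 u w : exists s, s != 0 /\ D (u + w) s = D u s + D w s.
Proof.
set z := mul (mul (g u) (g w)) (inv (g (u + w))).
have zC : z 0 C = 0 by rewrite mulC_E mulC_E !gC igC subrr.
pose s : F := if z 0 B == 0 then 1 else z 0 B.
have s0 : s != 0.
  by rewrite /s; case: ifP => [_|/negbT //]; exact: oner_neq0.
have hp : pA s 0 (z 0 B) 0 = pA (z 0 B) 0 s 0.
  by rewrite /s; case: eqP => [->|_] //; rewrite pA_bc00 pA_00bc.
exists s; split => //.
set x := vBC s 0.
have xC : x 0 C = 0 by rewrite vC.
have cwC : cj w x 0 C = 0 := cjC w xC.
move: (congr1 (fun y : 'rV[F]_n => y 0 A) (key u w x)) => /= E0.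
rewrite -/z [X in X = _]mulA_E [X in _ = X]mulA_E in E0; move: E0.
rewrite (cjA u cwC) (cjB u cwC) (cjC u cwC) (cjA w xC) (cjB w xC).
rewrite (cjA (u + w) xC) (cjB (u + w) xC) (cjC (u + w) xC) zC vA vB hp !add0r.
move/addIr; rewrite [X in _ = X]addrC => /addIr <-.
by rewrite addrC.
Qed.

End Grp.

Unset Implicit Arguments. Set Strict Implicit.

Lemma coordB (F : fieldType) m (x : 'rV[F]_(m.+3)) : Defs.coord x m.+2 = x 0 (B m).
Proof.
rewrite /Defs.coord /=.
have h : (m.+1 < m.+3)%N by rewrite !ltnS leqnSn.
rewrite (insubT (fun k => (k < m.+3)%N) h) /=.
by congr (x 0 _); apply: val_inj.
Qed.

Theorem mainTheorem9 (F : closedFieldType) (n : nat)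
  (mul : 'rV[F]_n -> 'rV[F]_n -> 'rV[F]_n) (inv : 'rV[F]_n -> 'rV[F]_n)
  (act : F -> 'rV[F]_n -> 'rV[F]_n) (a : F -> F) (e : 'I_n -> int) :
  (3 <= n)%N ->
  unipotent_law mul ->
  group_axioms mul inv ->
  torus_action mul act ->
  biregular_units a ->
  torus_form act a e ->
  normal_series mul inv act ->
  (* centralizer of upsilon U_{n-3} in U_{n-1}/U_{n-3} is U_{n-2}/U_{n-3} *)
  (forall u : F, u != 0 -> forall x, inU n.-1 x ->
     (same_coset mul (n - 3) (mul x (upsilon n u)) (mul (upsilon n u) x)
      <-> inU (n - 2) x)) ->
  exists (c : F) (h k : nat),
    c != 0 /\
    ((exists p, p \in [pchar F] /\ exists i j, h = (p ^ i)%N /\ k = (p ^ j)%N)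
     \/ ((forall p, p \notin [pchar F]) /\ h = 1%N /\ k = 1%N)) /\
    forall (u : F) x, inU n.-1 x ->
      same_coset mul (n - 3) (conj mul inv (upsilon n u) x) (target c u h k x).
Proof.
move=> n3 [psi [psi_poly [psi_last mulE]]] [mA [m0x [mx0 [mxV mVx]]]] _ _ _ _ cent.
have [m Dn] : exists m, n = m.+3 by exists (n - 3)%N; rewrite -addn3 subnK.
subst n.
have e3 : (m.+3 - 3 = m)%N by rewrite -addn3 addnK.
have e2 : (m.+3 - 2 = m.+1)%N by rewrite -(addn2 m.+1) addnK.
rewrite e3 e2 in cent; rewrite e3.
pose DD := D inv psi.
have pD : poly2 DD by apply: poly2_D => //.
have nzD : forall u v, u != 0 -> v != 0 -> DD u v != 0.
  by move=> u v u0 v0; apply: D_nz => //.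
have [c [h [k [c0 DE]]]] := poly2_struct pD nzD.
have hk : forall v1 v2 : F, (v1 + v2) ^+ k = v1 ^+ k + v2 ^+ k.
  have hadd : forall u v1 v2, DD u (v1 + v2) = DD u v1 + DD u v2.
    by move=> *; apply: D_add => //.
  move=> v1 v2; have := hadd 1 v1 v2.
  by rewrite -/DD !DE !expr1n !mulr1 -mulrDr => /(mulfI c0).
have hh : forall u w : F, (u + w) ^+ h = u ^+ h + w ^+ h.
  have hP3 : forall u w, exists s, s != 0 /\ DD (u + w) s = DD u s + DD w s.
    by move=> *; apply: D_P3 => //.
  move=> u w; have [s [s0]] := hP3 u w.
  rewrite -/DD !DE -mulrDl => /(mulIf (expf_neq0 k s0)).
  by rewrite -mulrDr => /(mulfI c0).
exists c, h, k; split => //; split.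
  case: (classic (exists p, p \in [pchar F])) => [[p pc]|np].
    left; exists p; split => //.
    have [i ->] := (additive_pow hh).1 p pc.
    have [j ->] := (additive_pow hk).1 p pc.
    by exists i, j.
  right.
  have np' : forall p, p \notin [pchar F] by move=> p; apply/negP => pc; apply: np; exists p.
  by split => //; split; [exact: (additive_pow hh).2 np' | exact: (additive_pow hk).2 np'].
move=> u x hx.
have xC : x 0 (C m) = 0 by apply: hx => /=.
apply: sc_agree => //; split.
- rewrite (@cjA F m mul inv psi) //; rewrite mxE /= eqxx coordB -/DD DE.
  done.
- rewrite (@cjB F m mul inv psi) //; rewrite mxE /=.
  by rewrite gtn_eqF.
- rewrite (@cjC F m mul inv psi) //; rewrite mxE /= gtn_eqF //.
Qed.
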